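(* Let $c\in\mathbb{Z}_{\ge1}$ and $\beta\in[0,1]$. If $\varphi(x)=\beta x+(1-\beta)\min(x,c)$, then \[ \alpha_\varphi=1-(1-\beta)\frac{c^c e^{-c}}{c!}. \]
   Context: $\alpha_\varphi=\inf_{x\in\mathbb{Z}_{\ge1}}\frac{\mathbb{E}_{X\sim\mathrm{Pois}(x)}[\varphi(X)]}{\varphi(x)}$. *)

(* Defs.v *)
From Stdlib Require Import Reals Arith.
From Coquelicot Require Import Coquelicot.
Open Scope R_scope.

Definition pois_expect (phi : R -> R) (x : R) : R :=
  Series (fun k : nat => exp (- x) * x ^ k / INR (fact k) * phi (INR k)).

Definition alpha_phi (phi : R -> R) : Rbar :=
  Glb_Rbar (fun r : R => exists x : nat, (1 <= x)%nat /\
                 r = pois_expect phi (INR x) / phi (INR x)).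

(* Main.v *)
Require Import Defs.
From Stdlib Require Import Reals Arith Lra Lia.
From Coquelicot Require Import Coquelicot.
From Stdlib Require Import ssreflect.
Open Scope R_scope.

Fixpoint Sx (n : nat) (x : R) : R :=
  match n with O => 0 | S m => Sx m x + x ^ m / INR (fact m) end.
Lemma INR_fact_pos k : 0 < INR (fact k).
Proof. apply lt_0_INR, lt_O_fact. Qed.
Definition fE (d : nat) (x : R) := INR (S d) + exp (- x) * (x * Sx d x - INR (S d) * Sx (S d) x).

Lemma mono (g dg : R -> R) a b : a <= b ->
  (forall x, a <= x <= b -> is_derive g x (dg x)) ->
  (forall x, a <= x <= b -> 0 <= dg x) -> g a <= g b.
Proof.
  move=> Hab Hd Hp.
  have H1 : forall x, Rmin a b < x < Rmax a b -> is_derive g x (dg x).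
  { move=> x. rewrite Rmin_left // Rmax_right // => Hx. apply Hd; lra. }
  have H2 : forall x, Rmin a b <= x <= Rmax a b -> continuity_pt g x.
  { move=> x. rewrite Rmin_left // Rmax_right // => Hx.
    apply continuity_pt_filterlim. apply: ex_derive_continuous. eexists. apply Hd; lra. }
  have [c [Hc E]] := MVT_gen g a b dg H1 H2.
  - move: Hc. rewrite Rmin_left // Rmax_right // => Hc.
    have := Hp c Hc. have : 0 <= b - a by lra. move=> K1 K2.
    have := Rmult_le_pos _ _ K2 K1. lra.
Qed.

Lemma Sx_deriv n x : is_derive (Sx n) x (Sx (pred n) x).
Proof.
  induction n as [|n IH].
  - apply (is_derive_ext (fun _ => 0)); first by []. exact (is_derive_const (0:R) x).
  - simpl. eapply is_derive_ext.
    { move=> t. reflexivity. }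
    have H2 : is_derive (fun t => t ^ n / INR (fact n)) x (INR n * 1 * x ^ pred n / INR (fact n)).
    { apply: is_derive_scal_l. apply: is_derive_pow. apply: is_derive_id. }
    have E : plus (Sx (pred n) x) (INR n * 1 * x ^ pred n / INR (fact n)) = Sx n x.
    { rewrite /plus /=. destruct n as [|k].
      - simpl. field.
      - change (Sx (S k) x) with (Sx k x + x ^ k / INR (fact k)).
        rewrite fact_simpl mult_INR S_INR /=. have := INR_fact_pos k. have := pos_INR k.
        intros. field. lra. }
    rewrite -E. apply: is_derive_plus => //.
Qed.

Lemma deriv_eq (f : R -> R) x L M : is_derive f x L -> L = M -> is_derive f x M.
Proof. by move=> H <-. Qed.

Lemma exp_neg_deriv x : is_derive (fun t => exp (- t)) x (- exp (- x)).
Proof. auto_derive. done. ring. Qed.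

Lemma fE_deriv d x : is_derive (fE d) x (exp (- x) * Sx (S d) x).
Proof.
  eapply deriv_eq. rewrite /fE.
  apply: is_derive_plus. apply: is_derive_const.
  apply: Derive.is_derive_mult. apply: exp_neg_deriv.
  apply: is_derive_minus.
  apply: Derive.is_derive_mult. apply: is_derive_id. apply: Sx_deriv.
  apply: is_derive_scal. apply: Sx_deriv.
  rewrite /minus /plus /zero /one /opp /=. destruct d as [|e]. simpl. field.
  change (Sx (S e) x) with (Sx e x + x ^ e / INR (fact e)). rewrite fact_simpl mult_INR !S_INR /=.
  have := INR_fact_pos e. have := pos_INR e. intros. field. lra.
Qed.

Lemma Sx_nonneg n x : 0 <= x -> 0 <= Sx n x.
Proof.
  move=> Hx. induction n as [|n IH]; simpl. lra.
  have := INR_fact_pos n. have := pow_le x n Hx. move=> H1 H2.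
  have : 0 <= x ^ n / INR (fact n). { apply Rdiv_le_0_compat; lra. } lra.
Qed.

Lemma Sx_0 n : Sx (S n) 0 = 1.
Proof.
  induction n as [|n IH]. simpl. field.
  change (Sx (S (S n)) 0) with (Sx (S n) 0 + 0 ^ (S n) / INR (fact (S n))).
  rewrite IH. have := INR_fact_pos (S n). simpl (0 ^ S n). intros. field. lra.
Qed.

Lemma fE_incr d a b : 0 <= a <= b -> fE d a <= fE d b.
Proof.
  move=> [Ha Hab]. apply (mono (fE d) (fun x => exp (- x) * Sx (S d) x)) => //.
  - move=> x _. apply fE_deriv.
  - move=> x Hx. apply Rmult_le_pos. left; apply exp_pos. apply Sx_nonneg; lra.
Qed.

Definition GE d x := fE d x - x * (exp (- x) * Sx (S d) x).

Lemma GE_deriv d x : is_derive (GE d) x (x * exp (- x) * (x ^ d / INR (fact d))).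
Proof.
  eapply deriv_eq. rewrite /GE.
  apply: is_derive_minus. apply: fE_deriv.
  apply: Derive.is_derive_mult. apply: is_derive_id.
  apply: Derive.is_derive_mult. apply: exp_neg_deriv. apply: Sx_deriv.
  rewrite /minus /plus /zero /one /opp /=. ring.
Qed.

Lemma GE_nonneg d x : 0 <= x -> 0 <= GE d x.
Proof.
  move=> Hx.
  have -> : 0 = GE d 0.
  { rewrite /GE /fE Sx_0. simpl. rewrite Ropp_0 exp_0. ring. }
  apply (mono (GE d) (fun x => x * exp (- x) * (x ^ d / INR (fact d)))) => //.
  - move=> t _. apply GE_deriv.
  - move=> t Ht. apply Rmult_le_pos. apply Rmult_le_pos. lra. left; apply exp_pos.
    apply Rdiv_le_0_compat. apply pow_le; lra. apply INR_fact_pos.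
Qed.

Lemma fE_ratio d a b : 0 < a <= b -> fE d b / b <= fE d a / a.
Proof.
  move=> [Ha Hab].
  suff : - (fE d a / a) <= - (fE d b / b) by lra.
  apply (mono (fun t => - (fE d t / t)) (fun t => GE d t / t ^ 2)) => //.
  - move=> t Ht. eapply deriv_eq.
    apply: is_derive_opp. apply: is_derive_div. apply: fE_deriv. apply: is_derive_id.
    simpl; lra.
    rewrite /GE /opp /one /=. field. have := INR_fact_pos d. move=> ?. split; lra.
  - move=> t Ht. apply Rdiv_le_0_compat. apply GE_nonneg; lra. apply pow_lt; lra.
Qed.
Definition pk (x : R) (k : nat) := exp (- x) * x ^ k / INR (fact k).


Lemma is_series_p x : is_series (pk x) 1.
Proof.
  have H := is_exp_Reals x. unfold is_pseries in H.
  apply (is_series_scal (exp (-x))) in H.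
  replace 1 with (scal (exp (-x)) (exp x)).
  2:{ rewrite /scal /= /mult /= -exp_plus. replace (-x+x) with 0 by ring. apply exp_0. }
  eapply is_series_ext; [|exact H]. intro n. rewrite /pk /scal /= /mult /= pow_n_pow.
  rewrite /Rdiv. ring.
Qed.

Lemma is_series_pk x : is_series (fun k => pk x k * INR k) x.
Proof.
  apply is_series_decr_1.
  have H := is_series_scal x _ _ (is_series_p x).
  have E : scal x 1 = plus x (opp (pk x 0 * INR 0)).
  { rewrite /plus /opp /scal /= /mult /=. ring. }
  rewrite E in H.
  eapply is_series_ext; [|exact H].
  intro n. change (scal x (pk x n)) with (x * pk x n). rewrite /pk fact_simpl mult_INR -tech_pow_Rmult.
  have := INR_fact_pos n. have := pos_INR n. intros. match goal with |- ?a = ?b => change (@eq R a b) end. rewrite S_INR. rewrite /scal /= /mult /=. field. lra.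
Qed.

Lemma is_series_finite (u : nat -> R) N :
  (forall k, (N < k)%nat -> u k = 0) -> is_series u (sum_n u N).
Proof.
  intro H. unfold is_series.
  apply filterlim_ext_loc with (fun _ => sum_n u N).
  - exists N. intros n Hn. induction Hn. reflexivity.
    rewrite sum_Sn H; [|lia]. rewrite IHHn. by rewrite plus_zero_r.
  - apply filterlim_const.
Qed.

Lemma sum_r x d N : (N <= d)%nat ->
  sum_n (fun k => pk x k * (Rmin (INR k) (INR (S d)) - INR (S d))) N =
  exp (-x) * (x * Sx N x - INR (S d) * Sx (S N) x).
Proof.
  induction N; intro HN.
  - rewrite sum_O /pk Rmin_left. simpl. field. apply le_INR; lia.
  - rewrite sum_Sn IHN; [|lia]. rewrite Rmin_left. 2: apply le_INR; lia.
    rewrite /pk. change (Sx (S (S N)) x) with (Sx (S N) x + x^(S N)/INR (fact (S N))).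
    change (Sx (S N) x) with (Sx N x + x^N/INR (fact N)).
    rewrite fact_simpl mult_INR -tech_pow_Rmult !S_INR /plus /=.
    have := INR_fact_pos N. have := pos_INR N. intros. field. lra.
Qed.


Lemma pois_expect_val (d : nat) (beta x : R) :
  pois_expect (fun y => beta * y + (1 - beta) * Rmin y (INR (S d))) x =
  beta * x + (1 - beta) * fE d x.
Proof.
  apply is_series_unique.
  have H1 := is_series_scal beta _ _ (is_series_pk x).
  have H2 := is_series_scal ((1-beta) * INR (S d)) _ _ (is_series_p x).
  have H3 := is_series_scal (1-beta) _ _
     (is_series_finite (fun k => pk x k * (Rmin (INR k) (INR (S d)) - INR (S d))) d ltac:(
       intros k Hk; cbv beta; rewrite Rmin_right; [ring| apply le_INR; lia])).
  rewrite sum_r in H3; [|lia].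
  have H := is_series_plus _ _ _ _ (is_series_plus _ _ _ _ H1 H2) H3.
  set c := INR (S d) in H H1 H2 H3 *. eapply is_series_ext; [|replace (beta * x + (1 - beta) * fE d x) with
     (plus (plus (scal beta x) (scal ((1 - beta) * INR (S d)) 1))
       (scal (1 - beta) (exp (- x) * (x * Sx d x - INR (S d) * Sx (S d) x)))); [exact H|]].
  - intro n. rewrite /plus /scal /= /mult /= /pk. ring.
  - rewrite /fE /plus /scal /= /mult /=. ring.
Qed.
Lemma fE_at_c d : let c := INR (S d) in
  fE d c = c * (1 - c ^ S d * exp (- c) / INR (fact (S d))).
Proof.
  move=> c. rewrite /fE -/c.
  change (Sx (S d) c) with (Sx d c + c ^ d / INR (fact d)).
  rewrite fact_simpl mult_INR -/c -tech_pow_Rmult.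
  have Hc : c = INR (S d) by []. have : 0 < c by rewrite Hc; apply lt_0_INR; lia.
  have := INR_fact_pos d. intros. field. lra.
Qed.

Theorem mainTheorem11 (c : nat) (beta : R) :
  (1 <= c)%nat -> 0 <= beta <= 1 ->
  alpha_phi (fun x => beta * x + (1 - beta) * Rmin x (INR c)) =
  Finite (1 - (1 - beta) * (INR c ^ c * exp (- INR c) / INR (fact c))).
Proof.
  move=> Hc Hb. destruct c as [|d]; first by lia.
  have Hfc := fE_at_c d. cbv zeta in Hfc.
  set cr := INR (S d) in Hfc *.
  set p := cr ^ S d * exp (- cr) / INR (fact (S d)) in Hfc *.
  have Hcr : 1 <= cr by rewrite /cr; apply (le_INR 1); lia.
  have Hp : 0 <= p.
  { rewrite /p. apply Rdiv_le_0_compat. apply Rmult_le_pos. apply pow_le; lra.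
    left; apply exp_pos. apply INR_fact_pos. }
  apply is_glb_Rbar_unique. split.
  - move=> r [n [Hn ->]]. simpl. rewrite pois_expect_val -/cr.
    set xr := INR n.
    have Hx : 1 <= xr by rewrite /xr; apply (le_INR 1); lia.
    set m := Rmin xr cr.
    have Hm1 : 1 <= m by rewrite /m; apply Rmin_glb; lra.
    have Hmx : m <= xr by apply Rmin_l.
    have Hf : m * (1 - p) <= fE d xr.
    { destruct (Rle_dec xr cr) as [Hle|Hgt].
      - rewrite /m Rmin_left //.
        have := fE_ratio d xr cr ltac:(lra). rewrite Hfc.
        have -> : cr * (1 - p) / cr = 1 - p by field; lra.
        move=> H. apply Rmult_le_reg_r with (/ xr). apply Rinv_0_lt_compat; lra.
        rewrite Rmult_comm -Rmult_assoc Rinv_l; lra.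
      - rewrite /m Rmin_right; last lra. rewrite -Hfc. apply fE_incr; lra. }
    set D := beta * xr + (1 - beta) * m.
    have HD : m <= D by rewrite /D; nra.
    apply Rmult_le_reg_r with D; first lra.
    rewrite /Rdiv Rmult_assoc Rinv_l; last lra.
    have H1 : (1 - beta) * (m * (1 - p)) <= (1 - beta) * fE d xr by apply Rmult_le_compat_l; lra.
    have H2 : (1 - beta) * p * m <= (1 - beta) * p * D by apply Rmult_le_compat_l; nra.
    rewrite /D in H2 *. lra.
  - move=> b Hb'. apply Hb'. exists (S d). split; first lia.
    rewrite pois_expect_val -/cr Hfc Rmin_left; last lra.
    field. nra.
Qed.
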